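(* Let $\mathcal{X} \subseteq \mathbb{R}^m$ be countable, let $\Theta = \{\theta_1,\dots,\theta_C\}$ with $C \ge 2$, let $p(\cdot\mid\theta_i)$, $i \in [C]$, be probability mass functions on $\mathcal{X}$, let $\pi = (\pi_1,\dots,\pi_C)$ be a prior probability vector, let $\mathcal{Q}$ be a subset of the $C$-dimensional probability simplex, and fix an observation $x \in \mathcal{X}$. Suppose that for every $i \in [C]$ we have $N_i$ i.i.d. samples $\widehat x_{ij}$, $j \in [N_i]$, from $p(\cdot\mid\theta_i)$, and let $\widehat\nu_i^{N_i} = N_i^{-1}\sum_{j=1}^{N_i} \delta_{\widehat x_{ij}}$ be the empirical distribution. For $\varepsilon_i > 0$ let $\mathbb{B}_i^{N_i} = \mathbb{B}_{\mathrm{KL}}(\widehat\nu_i^{N_i},\varepsilon_i) = \{\nu \in \mathcal{M}(\mathcal{X}) : \mathrm{KL}(\widehat\nu_i^{N_i}\parallel\nu) \le \varepsilon_i\}$. Define $$\mathcal{J}^{\mathrm{true}} = \min_{q \in \mathcal{Q}} \sum_{i=1}^C q_i(\log q_i - \log\pi_i) - \sum_{i=1}^C q_i \log p(x\mid\theta_i),$$ $$\widehat{\mathcal{J}}_{\mathbb{B}^N} = \min_{q \in \mathcal{Q}} \sum_{i=1}^C q_i(\log q_i - \log\pi_i) - \sum_{i=1}^C q_i \log\Big(\sup_{\nu_i \in \mathbb{B}_i^{N_i}} \nu_i(x)\Big),$$ and set $n = \min\{N_1,\dots,N_C\}$. Then $$\limsup_{n\to\infty} \frac1n \log \mathbb{P}^\infty\big(\mathcal{J}^{\mathrm{true}}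 < \widehat{\mathcal{J}}_{\mathbb{B}^N}\big) \le -\min_{i \in [C]} \varepsilon_i < 0.$$
   Context: $\mathcal{M}(\mathcal{X})$ is the set of probability mass functions on $\mathcal{X}$; $\delta_z$ is the Dirac measure at $z$; $[C] = \{1,\dots,C\}$. For $\nu_1 \ll \nu_2$, $\mathrm{KL}(\nu_1\parallel\nu_2) = \sum_{z\in\mathcal{X}} f(\nu_1(z)/\nu_2(z))\nu_2(z)$ with $f(t) = t\log t - t + 1$. $\mathbb{P}^\infty$ denotes the probability with respect to the (infinite) i.i.d. sampling of the training data. *)

(* Defs.v *)
From HB Require Import structures.
From mathcomp Require Import all_boot all_order all_algebra.
From mathcomp Require Import all_classical all_reals all_analysis.
Set Implicit Arguments. Unset Strict Implicit. Unset Printing Implicit Defensive.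
Import Order.TTheory GRing.Theory Num.Theory.
Local Open Scope classical_set_scope.
Local Open Scope ring_scope.

Section Defs.
Variables (R : realType) (m : nat).
Local Notation V := 'rV[R]_m.

Definition is_pmf (X : set V) (nu : V -> R) : Prop :=
  (forall z, 0 <= nu z) /\ (forall z, ~ X z -> nu z = 0) /\
  (\esum_(z in X) (nu z)%:E = 1%E).

Definition fKL (t : R) : R := t * ln t - t + 1.

Definition KL (X : set V) (nu1 nu2 : V -> R) : \bar R :=
  if `[< forall z, X z -> nu2 z = 0 -> nu1 z = 0 >]
  then \esum_(z in X) (fKL (nu1 z / nu2 z) * nu2 z)%:E
  else +oo%E.

Definition KLball (X : set V) (nuh : V -> R) (eps : R) : set (V -> R) :=
  [set nu | is_pmf X nu /\ (KL X nuh nu <= eps%:E)%E].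

Definition empirical (s : seq V) : V -> R :=
  fun z => (count (pred1 z) s)%:R / (size s)%:R.

(* objective sum_i q_i (log q_i - log pi_i) - sum_i q_i log L_i, in \bar R,
   with conventions 0 log 0 = 0, log 0 = -oo and 0 * (-oo) = 0 *)
Definition objective (C : nat) (pi : 'I_C -> R) (L : 'I_C -> \bar R)
  (q : 'I_C -> R) : \bar R :=
  (\sum_(i < C) ((q i * ln (q i))%:E - (q i)%:E * lne (pi i)%:E)
   - \sum_(i < C) (q i)%:E * lne (L i))%E.

Definition Jtrue (C : nat) (Q : set ('I_C -> R)) (pi : 'I_C -> R)
  (p : 'I_C -> V -> R) (x : V) : \bar R :=
  ereal_inf [set objective pi (fun i => (p i x)%:E) q | q in Q].

Definition Jhat (X : set V) (C : nat) (Q : set ('I_C -> R)) (pi : 'I_C -> R)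
  (eps : 'I_C -> R) (s : {ffun 'I_C -> seq V}) (x : V) : \bar R :=
  ereal_inf [set objective pi
    (fun i => ereal_sup [set (nu x)%:E | nu in KLball X (empirical (s i)) (eps i)]) q
    | q in Q].

Definition samples (X : set V) (C : nat) (N : 'I_C -> nat) :
  set {ffun 'I_C -> seq V} :=
  [set s | forall i, size (s i) = N i /\ (forall y, y \in s i -> X y)].

Definition sample_prob (X : set V) (C : nat) (p : 'I_C -> V -> R)
  (N : 'I_C -> nat) (E : set {ffun 'I_C -> seq V}) : \bar R :=
  \esum_(s in samples X N `&` E) (\prod_(i < C) \prod_(y <- s i) p i y)%:E.

End Defs.

(* min of N_1..N_C (the identity \max_i N i makes this the true minimum
   whenever C >= 1) *)
Definition nmin (C : nat) (N : 'I_C -> nat) : nat :=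
  (\big[minn/(\max_(i < C) N i)%N]_(i < C) N i)%N.

(* Main.v *)
Require Import Defs.
Set Warnings "-notation-overridden,-ambiguous-paths,-notation-incompatible-prefix".
From HB Require Import structures.
From mathcomp Require Import all_boot all_order all_algebra.
From mathcomp Require Import all_classical all_reals all_analysis.
From mathcomp Require Import lra ring.
Import Order.TTheory GRing.Theory Num.Theory.
Local Open Scope classical_set_scope.
Local Open Scope ring_scope.

Section Helpers.
Variable R : realType.

Lemma fKL_ge0 (t : R) : 0 <= t -> 0 <= fKL t.
Proof.
rewrite /fKL le_eqVlt => /predU1P[<-|t0]; first by rewrite mul0r subr0 add0r.
have ti : 0 < t^-1 by rewrite invr_gt0.
have h : ln (t^-1) <= t^-1 - 1.
  have := @le_ln1Dx R (t^-1 - 1); rewrite [1 + _]addrC subrK; apply; lra.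
rewrite lnV ?posrE // in h.
have tt : t * t^-1 = 1 by rewrite mulfV // gt_eqF.
nra.
Qed.

Lemma esum_finsupp (T : choiceType) (X : set T) (S : seq T) (f : T -> R) :
  uniq S -> (forall z, z \in S -> X z) ->
  (forall z, X z -> 0 <= f z) -> (forall z, X z -> z \notin S -> f z = 0) ->
  \esum_(z in X) (f z)%:E = (\sum_(z <- S) f z)%:E.
Proof.
move=> uS SX f0 fS.
rewrite (esumID [set` S]); last by move=> z Xz; rewrite lee_fin f0.
rewrite [X in (_ + X)%E]esum1 ?adde0; last first.
  by move=> z [Xz /= zS]; rewrite fS //; apply/negP.
have -> : X `&` [set` S] = [set` S].
  by apply/seteqP; split => [z [] //|z zS]; split => //; apply: SX.
rewrite esum_fset; [|exact: finite_seq|by move=> z; rewrite inE => /SX/f0; rewrite lee_fin].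
by rewrite -fsbig_seq // sumEFin.
Qed.

Lemma sum_le_esum (T : choiceType) (X : set T) (S : seq T) (f : T -> R) :
  uniq S -> (forall z, z \in S -> X z) ->
  (forall z, X z -> 0 <= f z) ->
  ((\sum_(z <- S) f z)%:E <= \esum_(z in X) (f z)%:E)%E.
Proof.
move=> uS SX f0; apply: esum_ge; exists [set` S].
  by split; [exact: finite_seq| move=> z /SX].
by rewrite -fsbig_seq // sumEFin.
Qed.

Lemma sum_count_seq (T : eqType) (S s : seq T) : uniq S -> {subset s <= S} ->
  (\sum_(z <- S) count_mem z s = size s)%N.
Proof.
move=> uS; elim: s => [|y s IH] sS /=; first by rewrite big1.
rewrite big_split /= IH; last by move=> z zs; apply: sS; rewrite inE zs orbT.
rewrite addnC -addn1; congr (_ + _)%N.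
rewrite (bigD1_seq y) //= ?eqxx; last by apply: sS; rewrite inE eqxx.
rewrite big1 ?addn0 // => z /negbTE; rewrite eq_sym => ->. done.
Qed.


Lemma fKL_mul (w v : R) : v != 0 -> fKL (w / v) * v = w * ln (w / v) - w + v.
Proof.
move=> v0; rewrite /fKL; set t := w / v.
have -> : w = t * v by rewrite /t divfK.
ring.
Qed.

Definition kl (a b : R) := a * ln (a / b) + (1 - a) * ln ((1 - a) / (1 - b)).

End Helpers.
Arguments kl {R}.

Section Emp.
Variables (R : realType) (m : nat).
Local Notation V := 'rV[R]_m.
Implicit Types (s : seq V) (x z : V).

Lemma emp_ge0 s z : 0 <= empirical s z.
Proof. by rewrite /empirical divr_ge0. Qed.

Lemma emp_le1 s z : empirical s z <= 1.
Proof.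
rewrite /empirical; have [->|s0] := eqVneq (size s) 0%N; first by rewrite invr0 mulr0.
by rewrite ler_pdivrMr ?ltr0n ?lt0n // mul1r ler_nat count_size.
Qed.

Lemma emp_out s z : z \notin s -> empirical s z = 0.
Proof. by move/count_memPn => e; rewrite /empirical e mul0r. Qed.

Lemma emp_sum s (S : seq V) : (0 < size s)%N -> uniq S -> {subset s <= S} ->
  \sum_(z <- S) empirical s z = 1.
Proof.
move=> s0 uS sS; rewrite /empirical -big_distrl /= -natr_sum sum_count_seq //.
by rewrite mulfV // pnatr_eq0 -lt0n.
Qed.

Definition nub s x (b : R) : V -> R :=
  fun z => if z == x then b else empirical s z * ((1 - b) / (1 - empirical s x)).

Section NuB.
Variables (X : set V) (s : seq V) (x : V) (b : R).
Hypotheses (s0 : (0 < size s)%N) (sX : forall y, y \in s -> X y) (Xx : X x).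
Hypotheses (ab : empirical s x <= b) (b1 : b <= 1).
Let a := empirical s x.
Let S := undup (x :: s).

Lemma S_uniq : uniq S. Proof. exact: undup_uniq. Qed.
Lemma S_X z : z \in S -> X z.
Proof. by rewrite mem_undup inE => /predU1P[->|/sX]. Qed.
Lemma s_S : {subset s <= S}.
Proof. by move=> z zs; rewrite mem_undup inE zs orbT. Qed.
Lemma x_S : x \in S.
Proof. by rewrite mem_undup inE eqxx. Qed.

Lemma emp_sum_nx : \sum_(z <- S | z != x) empirical s z = 1 - a.
Proof.
have := emp_sum s S s0 S_uniq s_S; rewrite (bigD1_seq x) ?x_S ?S_uniq //=.
by move=> <-; rewrite addrC addrK.
Qed.

Lemma nub_ge0 z : 0 <= nub s x b z.
Proof.
rewrite /nub; case: eqP => _; first exact: le_trans (emp_ge0 _ _) ab.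
rewrite mulr_ge0 ?emp_ge0 // divr_ge0 ?subr_ge0 ?emp_le1 //.
Qed.

Lemma nub_sum : \sum_(z <- S) nub s x b z = 1.
Proof.
rewrite (bigD1_seq x) ?x_S ?S_uniq //= /nub eqxx.
rewrite (eq_bigr (fun z => empirical s z * ((1 - b) / (1 - a)))); last first.
  by move=> z /negbTE ->.
rewrite -big_distrl /= emp_sum_nx.
have [a1|a1] := eqVneq (1 - a) 0.
  rewrite a1 mul0r addr0; have : a = 1 by apply/eqP; rewrite -subr_eq0 -oppr_eq0 opprB a1.
  move=> a1'; apply/eqP; rewrite eq_le b1 /=; by rewrite -a1'.
by rewrite mulrCA mulfV // mulr1 addrC subrK.
Qed.

Lemma nub_out z : X z -> z \notin S -> nub s x b z = 0.
Proof.
move=> _ zS; rewrite /nub; case: eqP => [e|_]; first by move: zS; rewrite e x_S.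
rewrite emp_out ?mul0r //; apply: contra zS; exact: s_S.
Qed.

Lemma nub_pmf : is_pmf X (nub s x b).
Proof.
split; first exact: nub_ge0.
split.
  move=> z Xz; rewrite /nub; case: eqP => [e|_]; first by move: Xz; rewrite e.
  by rewrite emp_out ?mul0r //; apply/negP => /sX; exact: Xz.
rewrite (@esum_finsupp R _ X S (nub s x b) S_uniq S_X) ?nub_sum //.
  by move=> z _; exact: nub_ge0.
exact: nub_out.
Qed.

Hypothesis hb1 : b = 1 -> a = 1.

Lemma a1_out z : a = 1 -> z != x -> empirical s z = 0.
Proof.
move=> a1 zx.
have e : (count_mem x s)%:R = (size s)%:R :> R.
  have := a1; rewrite /a /empirical => /(congr1 (fun t => t * (size s)%:R)).
  by rewrite divfK ?mul1r // pnatr_eq0 -lt0n.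
move/eqP: e; rewrite eqr_nat -all_count => /allP al.
apply: emp_out; apply/negP => /al /= /eqP zx'; by rewrite zx' eqxx in zx.
Qed.

Lemma nub_ac z : X z -> nub s x b z = 0 -> empirical s z = 0.
Proof.
move=> Xz; rewrite /nub; case: eqP => [->|/eqP zx].
  move=> b0; apply/eqP; rewrite eq_le emp_ge0 andbT; by rewrite -b0.
move/eqP; rewrite mulf_eq0 => /orP[/eqP //|].
rewrite mulf_eq0 invr_eq0 !subr_eq0 => /orP[/eqP/esym/hb1 a1|/eqP/esym a1];
  exact: a1_out.
Qed.

Lemma nub_KL : KL X (empirical s) (nub s x b) = (kl a b)%:E.
Proof.
rewrite /KL asboolT; last exact: nub_ac.
rewrite (@esum_finsupp R _ X S (fun z => fKL (empirical s z / nub s x b z) * nub s x b z) S_uniq S_X); first last.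
- by move=> z Xz zS; rewrite nub_out // mulr0.
- by move=> z _; rewrite mulr_ge0 ?nub_ge0 // fKL_ge0 // divr_ge0 ?emp_ge0 ?nub_ge0.
congr (_%:E).
transitivity (\sum_(z <- S) (empirical s z * ln (empirical s z / nub s x b z) - empirical s z + nub s x b z)).
  apply: eq_big_seq => z zS.
  have [h|h] := eqVneq (nub s x b z) 0; last by rewrite fKL_mul.
  by rewrite h mulr0 (nub_ac z (S_X z zS) h) mul0r subrr addr0.
rewrite !big_split /= sumrN nub_sum (emp_sum s S s0 S_uniq s_S) subrK.
rewrite (bigD1_seq x) ?x_S ?S_uniq //= /nub eqxx.
rewrite (eq_bigr (fun z => empirical s z * ln ((1 - a)/(1-b)))); last first.
  move=> z /negbTE ->.
  have [->|e0] := eqVneq (empirical s z) 0; first by rewrite !mul0r.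
  by rewrite invfM mulrA mulfV // mul1r invf_div.
by rewrite -big_distrl /= emp_sum_nx.
Qed.

End NuB.
End Emp.
Arguments nub {R m}.

Section PartA.
Variables (R : realType) (m : nat).
Local Notation V := 'rV[R]_m.
Local Open Scope ereal_scope.

Lemma lne_le (x y : \bar R) : x <= y -> lne x <= lne y.
Proof.
move=> xy; have [x0|x0] := leP x 0; first by rewrite le0_lneNy // leNye.
rewrite lee_lne // in_itv /= leey andbT ?(ltW x0) //.
exact: le_trans (ltW x0) xy.
Qed.

Lemma objective_le (C : nat) (pi : 'I_C -> R) (L L' : 'I_C -> \bar R) (q : 'I_C -> R) :
  (forall i, (0 <= q i)%R) -> (forall i, L i <= L' i) ->
  objective pi L' q <= objective pi L q.
Proof.
move=> q0 LL; rewrite /objective; apply: leeB => //.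
apply: lee_sum => i _; apply: lee_wpmul2l; first by rewrite lee_fin.
exact: lne_le.
Qed.

Lemma kl_aa (a : R) : kl a a = 0%R.
Proof.
rewrite /kl; have [->|a0] := eqVneq a 0%R; first by rewrite !mul0r subr0 divff ?oner_eq0 // ln1 mulr0 addr0.
have [a1|a1] := eqVneq (1 - a)%R 0%R; first by rewrite a1 mul0r divff // ln1 mulr0 addr0.
by rewrite !divff // ln1 !mulr0 addr0.
Qed.

Lemma pmf_sum_le1 (X : set V) (p : V -> R) (S : seq V) :
  is_pmf X p -> uniq S -> (forall z, z \in S -> X z) -> (\sum_(z <- S) p z <= 1)%R.
Proof.
move=> [p0 [_ p1]] uS SX; rewrite -lee_fin -p1.
apply: sum_le_esum => // z _; exact: p0.
Qed.

Lemma pmf_le1 (X : set V) (p : V -> R) z : is_pmf X p -> X z -> (p z <= 1)%R.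
Proof.
move=> pp Xz; have := @pmf_sum_le1 X p [:: z] pp isT.
by rewrite big_seq1; apply => y; rewrite inE => /eqP ->.
Qed.

Definition bad (N : nat) (p eps : R) (k : nat) : bool :=
  let a := (k%:R / N%:R)%R in (a < p)%R && ((p == 1%R) || (eps < kl a p)%R).

Lemma good_sup (X : set V) (s : seq V) (x : V) (p : V -> R) (eps : R) :
  (0 < size s)%N -> (forall y, y \in s -> X y) -> X x -> is_pmf X p -> (0 < eps)%R ->
  ~~ bad (size s) (p x) eps (count_mem x s) ->
  (p x)%:E <= ereal_sup [set (nu x)%:E | nu in KLball X (empirical s) eps].
Proof.
move=> s0 sX Xx pp e0 nb.
have p1 := @pmf_le1 X p x pp Xx.
have ea : empirical s x = ((count_mem x s)%:R / (size s)%:R)%R by [].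
have [pa|ap] := leP (p x) (empirical s x).
  have h : (nub s x (empirical s x) x)%:E <= ereal_sup [set (nu x)%:E | nu in KLball X (empirical s) eps].
    apply: ereal_sup_ubound; exists (nub s x (empirical s x)) => //; split.
      by apply: nub_pmf => //; exact: emp_le1.
    by rewrite nub_KL //; [rewrite kl_aa lee_fin ltW|exact: emp_le1].
  by apply: le_trans h; rewrite /nub eqxx lee_fin.

move: nb; rewrite /bad -ea ap /= negb_or => /andP[pn1]; rewrite -leNgt => klp.
have h : (nub s x (p x) x)%:E <= ereal_sup [set (nu x)%:E | nu in KLball X (empirical s) eps].
  apply: ereal_sup_ubound; exists (nub s x (p x)) => //; split.
    by apply: nub_pmf => //; exact: ltW.
  have hb : p x = 1%R -> empirical s x = 1%R by move=> e; rewrite e eqxx in pn1.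
  by rewrite (@nub_KL R m X s x (p x) s0 sX Xx (ltW ap) p1 hb) lee_fin.
by apply: le_trans h; rewrite /nub eqxx lee_fin.
Qed.

End PartA.
Arguments bad {R}.

Section PartA2.
Variables (R : realType) (m : nat).
Local Notation V := 'rV[R]_m.
Local Open Scope ereal_scope.

Lemma event_bad (X : set V) (C : nat) (Q : set ('I_C -> R)) (pi : 'I_C -> R)
  (p : 'I_C -> V -> R) (x : V) (eps : 'I_C -> R) (N : 'I_C -> nat)
  (s : {ffun 'I_C -> seq V}) :
  (forall i, is_pmf X (p i)) ->
  (forall q, Q q -> (forall i, (0 <= q i)%R) /\ (\sum_(i < C) q i = 1)%R) ->
  X x -> (forall i, (0 < eps i)%R) -> (forall i, (0 < N i)%N) ->
  samples X N s -> Jtrue Q pi p x < Jhat X Q pi eps s x ->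
  exists i, bad (N i) (p i x) (eps i) (count_mem x (s i)).
Proof.
move=> pp hQ Xx e0 N0 hs hJ; apply: contrapT => nex.
have good : forall i, (p i x)%:E <=
    ereal_sup [set (nu x)%:E | nu in KLball X (empirical (s i)) (eps i)].
  move=> i; have [si sX] := hs i.
  apply: good_sup => //; first by rewrite si.
  by rewrite si; apply/negP => b; apply: nex; exists i.
move: hJ; apply/negP; rewrite -leNgt /Jhat /Jtrue.
apply/ereal_infP => y [q Qq <-].
apply: le_trans (@objective_le R C pi _ _ q (hQ q Qq).1 good).
by apply: ereal_inf_lbound; exists q.
Qed.

End PartA2.

Section ProdLemma.
Variable R : realType.

Lemma prod_sum_le (T : eqType) (C : nat) (N : 'I_C -> nat) (g : 'I_C -> T -> R)
  (F : seq {ffun 'I_C -> seq T}) (S : seq T) (y0 : T) :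
  (forall j y, 0 <= g j y) -> uniq F -> y0 \in S ->
  (forall s, s \in F -> forall j, size (s j) = N j /\ {subset s j <= S}) ->
  \sum_(s <- F) \prod_(j < C) \prod_(y <- s j) g j y <=
  \prod_(j < C) (\sum_(y <- S) g j y) ^+ N j.
Proof.
move=> g0 uF y0S hF.
set M := (\max_(j < C) N j)%N.
have NM j : (N j <= M)%N by apply: leq_bigmax.
have K0 : (0 < size S)%N by move: y0S; rewrite -index_mem; exact: leq_ltn_trans (leq0n _).
pose t0 : 'I_(size S) := Ordinal K0.
pose P := fun jk : 'I_C * 'I_M => (jk.2 < N jk.1)%N.
pose G := fun (jk : 'I_C * 'I_M) (t : 'I_(size S)) => g jk.1 (nth y0 S t).
pose phi := fun s : {ffun 'I_C -> seq T} =>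
  [ffun jk : 'I_C * 'I_M => if P jk then insubd t0 (index (nth y0 (s jk.1) jk.2) S) else t0].
pose H := fun f : {ffun 'I_C * 'I_M -> 'I_(size S)} => \prod_(i | P i) G i (f i).
have H0 f : 0 <= H f by apply: prodr_ge0 => i _; apply: g0.
have eqle (a b : R) : a = b -> a <= b by move->.
have step1 : forall s, s \in F -> \prod_(j < C) \prod_(y <- s j) g j y = H (phi s).
  move=> s sF.
  have eq1 j : \prod_(y <- s j) g j y = \prod_(k < M | (k < N j)%N) g j (nth y0 (s j) k).
    have [ss _] := hF s sF j.
    by rewrite (big_nth y0) big_mkord ss (big_ord_widen M (fun i => g j (nth y0 (s j) i)) (NM j)).
  rewrite (eq_bigr _ (fun j _ => eq1 j)) pair_big_dep /H.
  apply: eq_big => // p /= Pp.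
  have [ss Ss] := hF s sF p.1.
  have yS : nth y0 (s p.1) p.2 \in S by apply: Ss; rewrite mem_nth // ss.
  by rewrite /G /phi ffunE /P /= Pp val_insubd index_mem yS nth_index.
rewrite (eq_big_seq _ step1) -(big_map phi predT H).
have injphi : {in F &, injective phi}.
  move=> s t sF tF e; apply/ffunP => j.
  have [ss Ss] := hF s sF j; have [st St] := hF t tF j.
  apply: (@eq_from_nth _ y0); first by rewrite ss st.
  move=> k; rewrite ss => kN.
  have kM : (k < M)%N := leq_trans kN (NM j).
  have := congr1 (fun f : {ffun 'I_C * 'I_M -> 'I_(size S)} => val (f (j, Ordinal kM))) e.
  have ys : nth y0 (s j) k \in S by apply: Ss; rewrite mem_nth // ss.
  have yt : nth y0 (t j) k \in S by apply: St; rewrite mem_nth // st.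
  rewrite /phi !ffunE /P /= kN !val_insubd !index_mem ys yt => ei.
  by rewrite -(nth_index y0 ys) ei nth_index.
have inpf : forall s, phi s \in pfamily t0 P (fun _ => predT).
  move=> s; apply/pfamilyP; split => //.
  rewrite /P; apply/fintype.subsetP => jk; rewrite !inE /phi ffunE; case: ifP => // _; by rewrite eqxx.
apply: (@le_trans _ _ (\sum_(f in pfamily t0 P (fun _ => predT)) H f)).
  rewrite big_uniq; last by rewrite map_inj_in_uniq.
  rewrite [X in _ <= X](bigID (mem (map phi F))) /=.
  rewrite -[X in X <= _]addr0 lerD ?sumr_ge0 //.
  apply: eqle; apply: eq_bigl => f.
  apply/idP/idP => [fm|/andP[] //]; rewrite fm andbT.
  by move: fm => /mapP [s _ ->].
rewrite /H -(big_distr_big_dep t0 P (fun _ => predT) G).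
have ceq j : \sum_(y <- S) g j y = \sum_(t < size S) g j (nth y0 S t).
  by rewrite (big_nth y0) big_mkord.
have pw (c : R) j : c ^+ N j = \prod_(k < M | (k < N j)%N) c.
  by rewrite -(big_ord_widen M (fun _ => c) (NM j)) prodr_const card_ord.
under [X in _ <= X]eq_bigr => j _ do rewrite ceq pw.
rewrite pair_big_dep; apply: eqle; by apply: eq_big.
Qed.

End ProdLemma.

Section Prob.
Variables (R : realType) (m : nat).
Local Notation V := 'rV[R]_m.
Variables (X : set V) (C : nat) (p : 'I_C -> V -> R) (x : V) (N : 'I_C -> nat).
Hypotheses (pp : forall i, is_pmf X (p i)) (Xx : X x).

Definition Pw (s : {ffun 'I_C -> seq V}) := \prod_(j < C) \prod_(y <- s j) p j y.

Lemma Pw_ge0 s : 0 <= Pw s.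
Proof. by apply: prodr_ge0 => j _; apply: prodr_ge0 => y _; case: (pp j). Qed.

Lemma prod_if_count (s : seq V) (w : R) :
  \prod_(y <- s) (if y == x then w else 1) = w ^+ count_mem x s.
Proof.
elim: s => [|y s IH]; first by rewrite big_nil expr0.
rewrite big_cons IH /= exprD; by case: (y == x); rewrite ?expr1 ?expr0 ?mul1r.
Qed.

Lemma FW (F : seq {ffun 'I_C -> seq V}) i w k : uniq F ->
  (forall s, s \in F -> samples X N s) -> 0 <= w ->
  w ^+ k * \sum_(s <- F | count_mem x (s i) == k) Pw s <= ((1 - p i x) + w * p i x) ^+ N i.
Proof.
move=> uF hF w0.
pose S := undup (x :: flatten [seq flatten [seq s j | j <- enum 'I_C] | s : {ffun 'I_C -> seq V} <- F]).
have SX z : z \in S -> X z.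
  rewrite mem_undup inE => /predU1P[->//|/flattenP[l /mapP[s sF ->]] /flattenP[l' /mapP[j _ ->]] zs].
  by have [_ ] := hF s sF j; apply.
have xS : x \in S by rewrite mem_undup inE eqxx.
have uS : uniq S by apply: undup_uniq.
pose g j y := p j y * (if (j == i) && (y == x) then w else 1).
have g0 j y : 0 <= g j y.
  by rewrite /g mulr_ge0 //; [case: (pp j)|case: ifP].
have gid (s : {ffun 'I_C -> seq V}) : \prod_(j < C) \prod_(y <- s j) g j y = Pw s * w ^+ count_mem x (s i).
  rewrite /g; under eq_bigr => j _ do rewrite big_split /=.
  rewrite big_split /=; congr (_ * _).
  rewrite (bigD1 i) //= [X in _ * X]big1 ?mulr1; last first.
    by move=> j /negbTE ji; apply: big1 => y _; rewrite ji.
  under eq_bigr => y _ do rewrite eqxx andTb.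
  by rewrite prod_if_count.
rewrite mulr_sumr big_mkcond /=.
apply: (@le_trans _ _ (\sum_(s <- F) \prod_(j < C) \prod_(y <- s j) g j y)).
  apply: ler_sum => s _; rewrite gid; case: eqP => [<-|_]; first by rewrite mulrC.
  by rewrite mulr_ge0 ?Pw_ge0 ?exprn_ge0.
apply: (@le_trans _ _ (\prod_(j < C) (\sum_(y <- S) g j y) ^+ N j)).
  apply: (@prod_sum_le R _ C N g F S x g0 uF xS) => s sF j; have [sj sjX] := hF s sF j.
  split => // z zs; rewrite mem_undup inE; apply/orP; right.
  apply/flattenP; exists (flatten [seq s j0 | j0 <- enum 'I_C]); first by apply/mapP; exists s.
  by apply/flattenP; exists (s j) => //; apply/mapP; exists j; rewrite ?mem_enum.
have sum1 j : \sum_(y <- S) p j y <= 1 by exact: (@pmf_sum_le1 R m X (p j) S (pp j) uS SX).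
have sg j : 0 <= \sum_(y <- S) g j y by apply: sumr_ge0.
rewrite (bigD1 i) //= -[X in _ <= X]mulr1; apply: ler_pM.
- exact: exprn_ge0.
- by apply: prodr_ge0 => j _; apply: exprn_ge0.
- have px1 : p i x <= 1 by exact: (@pmf_le1 R m X (p i) x (pp i) Xx).
  have px0 : 0 <= p i x by case: (pp i).
  apply: lerXn2r; [by rewrite nnegrE|by rewrite nnegrE addr_ge0 ?mulr_ge0 ?subr_ge0|].
  rewrite /g (bigD1_seq x) //= !eqxx /=.
  rewrite (eq_bigr (fun y => p i y)); last by move=> y /negbTE ->; rewrite mulr1.
  have := sum1 i; rewrite (bigD1_seq x) //= => h.
  lra.
- apply: prodr_ile1 => j ji; rewrite exprn_ge0 //= exprn_ile1 //.
  rewrite /g; under eq_bigr => y _ do rewrite (negbTE ji) andFb mulr1.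
  exact: sum1.
Qed.

End Prob.
Arguments Pw {R m C}.

Section RL.
Variable R : realType.

Lemma pow_expR (y : R) n : 0 < y -> y ^+ n = expR (n%:R * ln y).
Proof. by move=> y0; rewrite expRM_natl lnK // posrE. Qed.

Lemma RL (N k : nat) (p eps Q : R) : (0 < N)%N -> 0 <= p -> p <= 1 -> 0 <= Q ->
  bad N p eps k ->
  (forall w, 0 <= w -> w ^+ k * Q <= ((1 - p) + w * p) ^+ N) ->
  Q <= expR (- (N%:R * eps)).
Proof.
move=> N0 p0 p1 Q0; rewrite /bad /= => /andP[ap hb] hw.
set a := k%:R / N%:R in ap hb.
have Nr : 0 < N%:R :> R by rewrite ltr0n.
have a0 : 0 <= a by rewrite divr_ge0.
have kN : (k < N)%N.
  have : a < 1 by apply: lt_le_trans p1.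
  by rewrite ltr_pdivrMr // mul1r ltr_nat.
have [pe1|pn1] := eqVneq p 1.
  suff : Q <= 0 by move=> h; apply: le_trans h (ltW (expR_gt0 _)).
  rewrite leNgt; apply/negP => Qp.
  set w := Q / (Q + 1).
  have w0 : 0 < w by rewrite divr_gt0 // addr_gt0.
  have w1 : w <= 1 by rewrite ler_pdivrMr ?addr_gt0 // mul1r lerDl.
  have wQ : w < Q.
    by rewrite ltr_pdivrMr ?addr_gt0 // mulrDr mulr1 ltrDr mulr_gt0.
  have := hw w (ltW w0); rewrite pe1 subrr add0r mulr1.
  have -> : N = (k + (N - k).-1.+1)%N by rewrite prednK ?subn_gt0 // subnKC // ltnW.
  rewrite exprD ler_pM2l ?exprn_gt0 // exprSr => h.
  have : w ^+ (N - k).-1 * w <= w by apply: ler_piMl; [exact: ltW|rewrite exprn_ile1 // ltW].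
  move=> h2; have := le_trans h h2; rewrite leNgt wQ //.
move: hb; rewrite (negbTE pn1) /= => hkl.
have p1' : p < 1 by rewrite lt_neqAle pn1 p1.
have up : 0 < 1 - p by rewrite subr_gt0.
have [k0|kpos] := eqVneq k 0%N.
  have := hw 0 (lexx _); rewrite k0 expr0 mul1r mul0r addr0 => h.
  apply: le_trans h _; rewrite pow_expR // ler_expR.
  move: hkl; rewrite /kl /a k0 !mul0r add0r subr0 mul1r div1r lnV ?posrE // => hkl.
  nra.
have kr : 0 < k%:R :> R by rewrite ltr0n lt0n.
have apos : 0 < a by rewrite divr_gt0.
have ppos : 0 < p by apply: lt_trans ap.
have a1 : a < 1 by apply: lt_trans ap p1'.
have ua : 0 < 1 - a by rewrite subr_gt0.
set u := (1 - p) / (1 - a).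
have u0 : 0 < u by rewrite divr_gt0.
set w := a / p * u.
have w0 : 0 < w by rewrite mulr_gt0 // divr_gt0.
have pn0 : p != 0 by rewrite gt_eqF.
have un0 : 1 - a != 0 by rewrite gt_eqF.
have e1 : (1 - p) + w * p = u.
  rewrite /w /u; field; by rewrite un0 pn0.
have := hw w (ltW w0); rewrite e1 !pow_expR // => h.
have : Q <= expR (N%:R * ln u) * expR (- (k%:R * ln w)).
  by rewrite expRN ler_pdivlMr ?expR_gt0 // mulrC.
rewrite -expRD => h2; apply: le_trans h2 _; rewrite ler_expR.
have lw : ln w = ln (a / p) + ln u by rewrite /w lnM ?posrE // divr_gt0.
have lu : ln ((1 - a) / (1 - p)) = - ln u by rewrite /u -invf_div lnV ?posrE.
have ka : k%:R = N%:R * a :> R by rewrite /a mulrC divfK // gt_eqF.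
move: hkl; rewrite /kl lu => hkl.
rewrite lw ka.
nra.
Qed.

End RL.

Section Bound.
Variables (R : realType) (m : nat).

Lemma le_sum_term (I : finType) (P : pred I) (F : I -> R) i :
  P i -> (forall j, P j -> 0 <= F j) -> F i <= \sum_(j | P j) F j.
Proof.
move=> Pi F0; rewrite (bigD1 i) //= lerDl sumr_ge0 // => j /andP[/F0] //.
Qed.

Lemma le_sum_term0 (I : finType) (F : I -> R) i :
  (forall j, 0 <= F j) -> F i <= \sum_j F j.
Proof.
move=> F0; rewrite (bigD1 i) //= lerDl sumr_ge0 // => j _; exact: F0.
Qed.

Local Notation V := 'rV[R]_m.

Lemma prob_bound (X : set V) (C : nat) (p : 'I_C -> V -> R) (pi : 'I_C -> R)
  (Q : set ('I_C -> R)) (x : V) (eps : 'I_C -> R) (N : 'I_C -> nat) :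
  (forall i, is_pmf X (p i)) ->
  (forall q, Q q -> (forall i, 0 <= q i) /\ \sum_(i < C) q i = 1) ->
  X x -> (forall i, 0 < eps i) -> (forall i, (0 < N i)%N) ->
  (sample_prob X p N [set s | (Jtrue Q pi p x < Jhat X Q pi eps s x)%E]
   <= (\sum_(i < C) (N i).+1%:R * expR (- ((N i)%:R * eps i)))%:E)%E.
Proof.
move=> pp hQ Xx e0 N0.
rewrite /sample_prob /esum; apply: ge_ereal_sup => _ [A [finA AS] <-].
rewrite fsbig_finite //= sumEFin lee_fin.
set F := finmap.enum_fset (fset_set A).
have uF : uniq F by apply: finmap.fset_uniq.
have hF s : s \in F -> A s by rewrite in_fset_set // inE.
have hS s : s \in F -> samples X N s by move=> /hF /AS [].
apply: (@le_trans _ _ (\sum_(s <- F) \sum_(i < C) \sum_(k < (N i).+1 | bad (N i) (p i x) (eps i) k) (if count_mem x (s i) == k then Pw p s else 0))).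
  rewrite big_seq [X in _ <= X]big_seq; apply: ler_sum => s sF.
  have [hs hE] := AS s (hF s sF).
  have [i bi] := @event_bad R m X C Q pi p x eps N s pp hQ Xx e0 N0 hs hE.
  have ki : (count_mem x (s i) < (N i).+1)%N by rewrite ltnS -(hs i).1 count_size.
  have t0 : forall j (k : 'I_(N j).+1), 0 <= (if count_mem x (s j) == k then Pw p s else 0).
    by move=> j k; case: ifP => // _; exact: Pw_ge0.
  apply: (@le_trans _ _ (\sum_(k < (N i).+1 | bad (N i) (p i x) (eps i) k) (if count_mem x (s i) == k then Pw p s else 0))); last first.
    apply: (@le_sum_term0 _ (fun j => \sum_(k < (N j).+1 | bad (N j) (p j x) (eps j) k) (if count_mem x (s j) == k then Pw p s else 0)) i).
    by move=> j; apply: sumr_ge0 => k _; exact: t0.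
  apply: (@le_trans _ _ (if count_mem x (s i) == Ordinal ki then Pw p s else 0)).
    by rewrite /= eqxx.
  apply: (@le_sum_term _ _ (fun k : 'I_(N i).+1 => if count_mem x (s i) == k then Pw p s else 0) (Ordinal ki) bi).
  by move=> k _; exact: t0.
rewrite exchange_big /=; apply: ler_sum => i _.
rewrite exchange_big /=.
apply: (@le_trans _ _ (\sum_(k < (N i).+1) expR (- ((N i)%:R * eps i)))); last first.
  by rewrite sumr_const card_ord [X in _ <= X]mulr_natl.
rewrite [X in _ <= X](bigID (fun k : 'I_(N i).+1 => bad (N i) (p i x) (eps i) k)) /=.
rewrite -[X in X <= _]addr0 lerD //; last by apply: sumr_ge0 => k _; exact: ltW (expR_gt0 _).
apply: ler_sum => k bk.
rewrite -big_mkcond /=.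
have px0 : 0 <= p i x by case: (pp i).
have px1 : p i x <= 1 by exact: (@pmf_le1 R m X (p i) x (pp i) Xx).
apply: (@RL R (N i) k (p i x) (eps i) _ (N0 i) px0 px1 _ bk).
  by apply: sumr_ge0 => s _; exact: Pw_ge0.
move=> w w0; exact: (@FW R m X C p x N pp Xx F i w k uF hS w0).
Qed.

End Bound.

Lemma bigmin_le (I : eqType) (r : seq I) (F : I -> nat) x0 i :
  i \in r -> (\big[minn/x0]_(j <- r) F j <= F i)%N.
Proof.
elim: r => [//|j r IH]; rewrite inE big_cons => /predU1P[->|ir].
  exact: geq_minl.
exact: leq_trans (geq_minr _ _) (IH ir).
Qed.

Lemma nmin_le (C : nat) (N : 'I_C -> nat) i : (nmin N <= N i)%N.
Proof. by apply: bigmin_le; exact: mem_index_enum. Qed.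

Lemma nmin_ge (C : nat) (N : 'I_C -> nat) n0 (i0 : 'I_C) :
  (forall i, n0 <= N i)%N -> (n0 <= nmin N)%N.
Proof.
move=> h; rewrite /nmin; apply: (big_ind (fun v => n0 <= v)%N) => //.
- exact: leq_trans (h i0) (leq_bigmax i0).
- by move=> a b ha hb; rewrite leq_min ha hb.
Qed.

Theorem mainTheorem8 (R : realType) (m : nat) (X : set 'rV[R]_m)
  (C : nat) (p : 'I_C -> 'rV[R]_m -> R) (pi : 'I_C -> R)
  (Q : set ('I_C -> R)) (x : 'rV[R]_m) (eps : 'I_C -> R) :
  countable X ->
  (2 <= C)%N ->
  (forall i, is_pmf X (p i)) ->
  (forall i, 0 <= pi i) -> \sum_(i < C) pi i = 1 ->
  (forall q, Q q -> (forall i, 0 <= q i) /\ \sum_(i < C) q i = 1) ->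
  X x ->
  (forall i, 0 < eps i) ->
  let epsmin : \bar R := (\big[mine/+oo%E]_(i < C) (eps i)%:E)%E in
  (forall delta : R, 0 < delta ->
    exists n0 : nat, forall N : 'I_C -> nat, (forall i, n0 <= N i)%N ->
      (((nmin N)%:R^-1)%:E *
        lne (sample_prob X p N
               [set s | (Jtrue Q pi p x < Jhat X Q pi eps s x)%E])
       <= - epsmin + delta%:E)%E)
  /\ (- epsmin < 0)%E.
Proof.
move=> cX C2 pp pi0 pi1 hQ Xx e0 epsmin.
have C0 : (0 < C)%N by apply: leq_trans C2.
pose i0 : 'I_C := Ordinal C0.
have E1 i : (epsmin <= (eps i)%:E)%E.
  by rewrite /epsmin (bigD1 i) //= ge_min lexx.
have E2 : (0 < epsmin)%E.
  rewrite /epsmin; apply: (big_ind (fun y => 0 < y)%E) => //.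
  - by move=> a b ha hb; rewrite lt_min ha hb.
  - by move=> i _; rewrite lte_fin.
have Efin : epsmin = (fine epsmin)%:E.
  rewrite fineK // fin_numE; apply/andP; split.
    by apply/eqP => h; rewrite h in E2.
  by apply/eqP => h; have := E1 i0; rewrite h leye_eq.
set e := fine epsmin in Efin.
have e0' : 0 < e by rewrite -lte_fin -Efin.
have ee i : e <= eps i by rewrite -lee_fin -Efin.
split; last by rewrite Efin -EFinN lte_fin oppr_lt0.
move=> delta d0.
set d := Num.min delta e.
have dpos : 0 < d by rewrite lt_min d0 e0'.
have dd : d <= delta by rewrite ge_min lexx.
have de : d <= e by rewrite ge_min lexx orbT.
set K := 1 + 2 / d.
have K1 : 1 <= K by rewrite lerDl divr_ge0 // ltW.
set B := C%:R * K.
have Cr : 2 <= C%:R :> R by rewrite ler_nat.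
have B1 : 1 <= B by rewrite /B; nra.
exists (Num.trunc (2 * ln B / d)).+1.
move=> N hN.
set n := nmin N.
have nle i : (n <= N i)%N by apply: nmin_le.
have nge : ((Num.trunc (2 * ln B / d)).+1 <= n)%N by exact: (@nmin_ge C N _ i0 hN).
have npos : (0 < n)%N by apply: leq_trans nge.
have nr : 0 < n%:R :> R by rewrite ltr0n.
have N0 i : (0 < N i)%N by apply: leq_trans npos (nle i).
have hP := @prob_bound R m X C p pi Q x eps N pp hQ Xx e0 N0.
set sp := sample_prob _ _ _ _ in hP *.
set S := \sum_(i < C) _ in hP.
set T := B * expR (- (n%:R * (e - d / 2))).
have ST : S <= T.
  have tb i : (N i).+1%:R * expR (- ((N i)%:R * eps i)) <= K * expR (- (n%:R * (e - d / 2))).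
    set Nr := (N i)%:R.
    have Nr0 : 0 <= Nr by [].
    have h1 : (N i).+1%:R <= K * expR (Nr * (d / 2)).
      have ex := expR_ge1Dx (Nr * (d / 2)).
      have f2 : 2 / d * (Nr * (d / 2)) = Nr by field; rewrite gt_eqF.
      have : K * (1 + Nr * (d / 2)) <= K * expR (Nr * (d / 2)).
        by rewrite ler_pM2l // (lt_le_trans ltr01 K1).
      apply: le_trans; rewrite -addn1 natrD /K mulrDl mul1r mulrDr mulr1 f2.
      have : 0 <= Nr * (d / 2) by rewrite mulr_ge0 // divr_ge0 // ltW.
      have : 0 <= 2 / d by rewrite divr_ge0 // ltW.
      lra.
    have h2 : expR (- (Nr * eps i)) <= expR (- (Nr * e)).
      by rewrite ler_expR lerN2 ler_wpM2l.
    apply: le_trans (ler_pM _ _ h1 h2) _; [by []|exact: ltW (expR_gt0 _)|].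
    rewrite -mulrA -expRD ler_pM2l ?(lt_le_trans ltr01 K1) // ler_expR.
    have nN : n%:R <= Nr by rewrite ler_nat.
    have : 0 <= e - d / 2 by lra.
    nra.
  apply: le_trans (ler_sum _ (fun i _ => tb i)) _.
  by rewrite sumr_const card_ord /T /B -mulrA [X in _ <= X]mulr_natl.
have sp0 : (0 <= sp)%E by apply: esum_ge0 => s _; rewrite lee_fin; exact: Pw_ge0.
rewrite Efin.
have [spn|spp] := leP sp 0%E.
  by rewrite le0_lneNy // gt0_muleNy ?leNye // lte_fin invr_gt0.
have spT : (sp <= T%:E)%E by apply: le_trans hP _; rewrite lee_fin.
have spf : sp = (fine sp)%:E.
  rewrite fineK // fin_numE; apply/andP; split.
    by apply/eqP => h; rewrite h in spp.
  by apply/eqP => h; move: spT; rewrite h leye_eq.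
set r := fine sp in spf.
have r0 : 0 < r by rewrite -lte_fin -spf.
have T0 : 0 < T by rewrite mulr_gt0 ?expR_gt0 // (lt_le_trans ltr01 B1).
rewrite spf lne_EFin // -EFinM -EFinN -EFinD lee_fin.
have lr : ln r <= ln T.
  by rewrite ler_ln ?posrE // -lee_fin -spf.
have lT : ln T = ln B - n%:R * (e - d / 2).
  by rewrite /T lnM ?posrE ?expR_gt0 ?(lt_le_trans ltr01 B1) // expRK.
have LB : 2 * ln B < n%:R * d.
  rewrite -ltr_pdivrMr //; apply: lt_le_trans (truncnS_gt _) _.
  by rewrite ler_nat.
rewrite mulrC ler_pdivrMr //.
nra.
Qed.
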